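(* Let $\langle \Lambda, \mathcal{S}\rangle$ be a measurable space and let $P_{00}, P_{0+}, P_{+0}, P_{++}$ be four probability measures on it that satisfy the Preparation Uninformativeness Condition, i.e. there is a measure $Q$ dominating all four, with densities $\mu_{xy} = dP_{xy}/dQ$ ($x,y\in\{0,+\}$) such that for all $\lambda\in\Lambda$, $$\mu_{00}(\lambda)\,\mu_{++}(\lambda) = \mu_{0+}(\lambda)\,\mu_{+0}(\lambda).$$ Let $\varepsilon>0$ and suppose there is an $m$-outcome experiment $E$, given by measurable functions $p_k:\Lambda\to[0,1]$, $k\in K$, $|K|=m$, with $\sum_{k\in K}p_k(\lambda)=1$ for all $\lambda$, such that each outcome $k$ is $\varepsilon$-precluded by some $P_{xy}$, i.e. for each $k$ there exist $x,y\in\{0,+\}$ with $\int_\Lambda p_k\,dP_{xy}\le\varepsilon$. Then $$\delta(P_{00},P_{++}) \ge H(P_{00},P_{++})^2 \ge 1-2\sqrt{m\varepsilon}$$ and $$\delta(P_{0+},P_{+0}) \ge H(P_{0+},P_{+0})^2 \ge 1-2\sqrt{m\varepsilon}.$$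
   Context: For probability measures $P,P'$ on $\langle\Lambda,\mathcal{S}\rangle$ with densities $p,q$ with respect to a common dominating measure $\nu$: the total variation distance is $\delta(P,P')=\sup_{A\in\mathcal{S}}|P(A)-P'(A)|=1-\int_\Lambda\min(p,q)\,d\nu$, and the Hellinger distance $H(P,P')$ is defined by $H(P,P')^2=\frac12\int_\Lambda(\sqrt p-\sqrt q)^2\,d\nu = 1-\int_\Lambda\sqrt{pq}\,d\nu$. *)

(* Defs.v *)
From HB Require Import structures.
From mathcomp Require Import all_boot all_order all_algebra.
From mathcomp Require Import all_classical all_reals all_analysis.
Set Implicit Arguments. Unset Strict Implicit. Unset Printing Implicit Defensive.
Import Order.TTheory GRing.Theory Num.Theory.
Local Open Scope classical_set_scope.
Local Open Scope ring_scope.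
Local Open Scope ereal_scope.

Definition tv_dist (d : measure_display) (T : measurableType d) (R : realType)
  (P P' : probability T R) : \bar R :=
  ereal_sup [set `|P A - P' A| | A in measurable].

(* Squared Hellinger distance computed from densities p, q w.r.t. a common
   dominating measure nu:  H^2 = 1 - \int sqrt(p q) dnu. *)
Definition hellinger2 (d : measure_display) (T : measurableType d) (R : realType)
  (nu : {measure set T -> \bar R}) (p q : T -> R) : \bar R :=
  1 - \int[nu]_t (Num.sqrt (p t * q t))%:E.

Definition is_density (d : measure_display) (T : measurableType d) (R : realType)
  (nu : {measure set T -> \bar R}) (P : probability T R) (f : T -> R) : Prop :=
  [/\ measurable_fun setT f, (forall t, (0 <= f t)%R) &
      forall A, measurable A -> P A = \int[nu]_(t in A) (f t)%:E].

(* Main.v *)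
Require Import Defs.
From HB Require Import structures.
From mathcomp Require Import all_boot all_order all_algebra.
From mathcomp Require Import all_classical all_reals all_analysis.
From mathcomp Require Import measurable_realfun ring lra.
Import Order.TTheory GRing.Theory Num.Theory.
Local Open Scope classical_set_scope.
Local Open Scope ring_scope.
Local Open Scope ereal_scope.
Section cov_sec.
Import HBNNSimple.
Lemma cov (d : measure_display) (T : measurableType d) (R : realType)
  (Q : {measure set T -> \bar R}) (P : probability T R) (fd : T -> R)
  (Hd : is_density Q P fd) (f : T -> \bar R) E : (forall x, 0 <= f x) ->
    measurable E -> measurable_fun E f ->
  \int[Q]_(x in E) (f x * (fd x)%:E) = \int[P]_(x in E) f x.
Proof.
case: Hd => mfd fd0 f_integral.
move=> f0 mE mf; set g := EFin \o fd.
have mg : measurable_fun E g by exact/measurable_funTS/measurable_EFinP.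
pose h := nnsfun_approx mE mf.
have -> : \int[P]_(x in E) f x =
    lim (\int[P]_(x in E) (EFin \o h n) x @[n --> \oo]).
  have fE x : E x -> f x = lim ((EFin \o h n) x @[n --> \oo]).
    by move=> Ex; apply/esym/cvg_lim => //; exact: cvg_nnsfun_approx.
  under eq_integral => x /[!inE] /fE -> //.
  apply: monotone_convergence => //.
  - move=> n; apply/measurable_EFinP.
    by apply: (measurable_funS measurableT) => //; exact/measurable_funP.
  - by move=> n x Ex //=; rewrite lee_fin.
  - by move=> x Ex a b ab; rewrite lee_fin; exact/lefP/nd_nnsfun_approx.
have -> : \int[Q]_(x in E) (f \* g) x =
    lim (\int[Q]_(x in E) ((EFin \o h n) \* g) x @[n --> \oo]).
  have fg x : E x -> f x * g x = lim (((EFin \o h n) \* g) x @[n --> \oo]).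
    by move=> Ex; apply/esym/cvg_lim => //; apply: cvgeZr;
      [by []|exact: cvg_nnsfun_approx].
  under eq_integral => x /[!inE] /fg -> //.
  apply: monotone_convergence => [//| | |].
  - move=> n; apply/emeasurable_funM => //; apply/measurable_funTS.
      exact/measurable_EFinP.
  - by move=> n x Ex /=; rewrite mule_ge0 ?lee_fin.
  - by move=> x Ex a b ab/=; rewrite lee_wpmul2r ?lee_fin//; exact/lefP/nd_nnsfun_approx.
suff suf n : \int[Q]_(x in E) ((EFin \o h n) x * g x) =
    \int[P]_(x in E) (EFin \o h n) x.
  by under eq_fun do rewrite suf.
transitivity (\int[P]_(x in E)
   (\sum_(y \in range (h n)) (y * \1_(h n @^-1` [set y]) x)%:E)); last first.
  by apply: eq_integral => t tE; rewrite /= fimfunE -fsumEFin.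
have indich m r : measurable_fun E (fun x => (r * \1_(h m @^-1` [set r]) x)%:E).
  by apply: (measurable_comp measurableT) => //; exact: measurable_funM.
rewrite ge0_integral_fsum//; last by move=> m y Ey; exact: nnfun_muleindic_ge0.
transitivity (\int[Q]_(x in E) (\sum_(y \in range (h n))
    (y * \1_(h n @^-1` [set y]) x)%:E * g x)).
  under [RHS]eq_integral => x xE.
    rewrite -ge0_mule_fsuml => [|y]; last exact: nnfun_muleindic_ge0.
    rewrite fsumEFin // -(fimfunE _ x); over.
  by [].
rewrite ge0_integral_fsum//; last 2 first.
  - move=> y; apply: emeasurable_funM => //.
  - by move=> m y Ey; rewrite mule_ge0 ?lee_fin// -lee_fin EFinM; exact: nnfun_muleindic_ge0.
apply: eq_fsbigr => r rhn.
under [RHS]eq_integral do rewrite EFinM.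
rewrite integralZl_indic_nnsfun => //.
under eq_integral do rewrite EFinM -muleA.
rewrite ge0_integralZl//.
- under eq_integral do rewrite muleC.
  rewrite (eq_integral (g \_ (h n @^-1` [set r]))); last first.
    by move=> x xE; rewrite epatch_indic.
  by rewrite -integral_mkcondr -f_integral// integral_indic// setIC.
- apply: emeasurable_funM; first exact/measurable_EFinP.
  exact: mg.
- by move=> t Et; rewrite mule_ge0 ?lee_fin.
- by move: rhn; rewrite inE => -[t _ <-]; rewrite lee_fin.
Qed.

End cov_sec.
Arguments cov {d T R Q P fd} Hd f E.

Lemma prob_fin (d : measure_display) (T : measurableType d) (R : realType)
  (P : probability T R) A : measurable A ->
  exists a : R, P A = a%:E /\ (0 <= a <= 1)%R.
Proof.
move=> mA; have h0 := measure_ge0 P A; have h1 := probability_le1 P mA.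
have hf : P A \is a fin_num by rewrite fin_num_measure.
exists (fine (P A)); split; first by rewrite fineK.
by rewrite -!lee_fin fineK // h0 h1.
Qed.

Lemma minrl {R : realType} {a b : R} : (a <= b)%R -> Num.min a b = a.
Proof. by rewrite /Num.min; case: ltgtP. Qed.

Lemma minrr {R : realType} {a b : R} : (b <= a)%R -> Num.min a b = b.
Proof. by rewrite /Num.min; case: ltgtP. Qed.

Lemma min_le_sqrt (R : realType) (a b : R) : (0 <= a)%R -> (0 <= b)%R ->
  (Num.min a b <= Num.sqrt (a * b))%R.
Proof.
move=> a0 b0.
have [ab|ba] := leP a b.
  rewrite -{1}(ger0_norm a0) -sqrtr_sqr ler_wsqrtr // expr2.
  by rewrite ler_pM.
rewrite -{1}(ger0_norm b0) -sqrtr_sqr ler_wsqrtr // expr2.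
by rewrite ler_pM // ltW.
Qed.

Lemma hel_tv (d : measure_display) (T : measurableType d) (R : realType)
  (Q : {measure set T -> \bar R}) (P1 P2 : probability T R) (f g : T -> R)
  (Hf : is_density Q P1 f) (Hg : is_density Q P2 g) :
  hellinger2 Q f g <= tv_dist P1 P2.
Proof.
case: Hf => mf f0 If; case: Hg => mg g0 Ig.
pose A := [set t | (g t < f t)%R].
have mA : measurable A.
  have mt : measurable [set true] by [].
  have := measurable_fun_ltr mg mf measurableT mt.
  by rewrite setTI.
have mAC : measurable (~` A) by exact: measurableC.
have mmin : measurable_fun setT (fun t => (Num.min (f t) (g t))%:E).
  by apply/measurable_EFinP; exact: measurable_minr.
have Imin : P2 A + P1 (~` A) <= \int[Q]_t (Num.sqrt (f t * g t))%:E.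
  have -> : P2 A = \int[Q]_(t in A) (Num.min (f t) (g t))%:E.
    rewrite Ig //; apply: eq_integral => t; rewrite inE /A /= => gf.
    by rewrite (minrr (ltW gf)).
  have -> : P1 (~` A) = \int[Q]_(t in ~` A) (Num.min (f t) (g t))%:E.
    rewrite If //; apply: eq_integral => t; rewrite inE /A /= => gf.
    by rewrite minrl // leNgt; apply/negP.
  rewrite -ge0_integral_setU //; last 3 first.
  - exact: measurable_funTS.
  - by move=> t _; rewrite lee_fin le_min f0 g0.
  - by rewrite disj_set2E setICr.
  have -> : A `|` ~` A = setT by rewrite setUCr.
 apply: ge0_le_integral => //.
  - by move=> t _; rewrite lee_fin le_min f0 g0.
  - apply/measurable_EFinP; apply: measurableT_comp => //.
      exact: continuous_measurable_fun (@sqrt_continuous R).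
    exact: measurable_funM.
  - by move=> t _; rewrite lee_fin min_le_sqrt.
have tv : `|P1 A - P2 A| <= tv_dist P1 P2.
  by apply: ereal_sup_ubound; exists A.
apply: le_trans tv.
have [a [Ha a01]] := prob_fin _ _ _ P1 _ mA.
have [b [Hb b01]] := prob_fin _ _ _ P2 _ mA.
move: Imin; rewrite probability_setC // Ha Hb /hellinger2.
set I := \int[Q]_t _.
have I0 : 0 <= I by apply: integral_ge0 => t _; rewrite lee_fin sqrtr_ge0.
move: I I0 => [r| |] //= r0 Hr.
  rewrite -EFinB -!EFinB -EFinD in Hr *.
  rewrite /= lee_fin in Hr *.
  apply: le_trans (ler_norm _); lra.
by rewrite addeNy leNye.
Qed.

Arguments hel_tv {d T R Q P1 P2 f g}.

Lemma amgm (R : realType) (a b X Y : R) : (0 < a)%R -> (0 < b)%R ->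
  (4 * a * b = 1)%R -> (0 <= X)%R -> (0 <= Y)%R ->
  (Num.sqrt (X * Y) <= a * X + b * Y)%R.
Proof.
move=> a0 b0 ab X0 Y0.
rewrite sqrtrM //.
have hX := sqr_sqrtr X0; have hY := sqr_sqrtr Y0.
set u := Num.sqrt X in hX *; set v := Num.sqrt Y in hY *.
rewrite -hX -hY.
have h : (0 <= (2 * a * u - v) ^+ 2)%R by rewrite sqr_ge0.
have e : (4 * a * (a * u ^+ 2 + b * v ^+ 2 - u * v) = (2 * a * u - v) ^+ 2)%R.
  transitivity (4 * a * a * u ^+ 2 + (4 * a * b) * v ^+ 2 - 4 * a * u * v)%R; first by ring.
  rewrite ab; ring.
have : (0 <= 4 * a * (a * u ^+ 2 + b * v ^+ 2 - u * v))%R by rewrite e.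
rewrite pmulr_rge0 ?subr_ge0 //.
by rewrite mulr_gt0.
Qed.

Theorem theorem2 (d : measure_display) (T : measurableType d) (R : realType)
  (P : bool -> bool -> probability T R)
  (Q : {measure set T -> \bar R}) (mu : bool -> bool -> T -> R)
  (Hdens : forall x y, is_density Q (P x y) (mu x y))
  (HPUC : forall t, (mu false false t * mu true true t
                     = mu false true t * mu true false t)%R)
  (eps : R) (heps : (0 < eps)%R)
  (K : finType) (p : K -> T -> R)
  (Hpmeas : forall k, measurable_fun setT (p k))
  (Hp01 : forall k t, (0 <= p k t <= 1)%R)
  (Hpsum : forall t, (\sum_(k : K) p k t)%R = 1%R)
  (Hprecl : forall k, exists x y, \int[P x y]_t (p k t)%:E <= eps%:E) :
  let bound := (1 - 2 * Num.sqrt (#|K|%:R * eps))%:E in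
  [/\ hellinger2 Q (mu false false) (mu true true)
        <= tv_dist (P false false) (P true true),
      bound <= hellinger2 Q (mu false false) (mu true true),
      hellinger2 Q (mu false true) (mu true false)
        <= tv_dist (P false true) (P true false)
    & bound <= hellinger2 Q (mu false true) (mu true false)].
Proof.
move=> bound.
have H1 := hel_tv (Hdens false false) (Hdens true true).
have H3 := hel_tv (Hdens false true) (Hdens true false).
have Heq : hellinger2 Q (mu false true) (mu true false) =
           hellinger2 Q (mu false false) (mu true true).
  by rewrite /hellinger2; congr (_ - _); apply: eq_integral => t _; rewrite HPUC.
suff H2 : bound <= hellinger2 Q (mu false false) (mu true true).
  by split => //; rewrite Heq.
have mu0 x y t : (0 <= mu x y t)%R by case: (Hdens x y).
have mmu x y : measurable_fun setT (mu x y) by case: (Hdens x y).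
have Imu x y : \int[Q]_t (mu x y t)%:E = 1.
  by case: (Hdens x y) => _ _ h; rewrite -(probability_setT (P x y)) h.
have : forall k, exists xy : bool * bool, \int[P xy.1 xy.2]_t (p k t)%:E <= eps%:E.
  by move=> k; have [x [y h]] := Hprecl k; exists (x, y).
move=> /choice [c Hc].
have p0 k t : (0 <= p k t)%R by case/andP: (Hp01 k t).
have Hc' k : \int[Q]_t (p k t * mu (c k).1 (c k).2 t)%:E <= eps%:E.
  apply: le_trans (Hc k).
  under eq_integral do rewrite EFinM.
  rewrite (cov (Hdens _ _) (fun t => (p k t)%:E) setT) //.
  - by move=> x; rewrite lee_fin.
  - by apply/measurable_EFinP; exact: Hpmeas.
have [t0 _] : exists t : T, True.
  apply: contrapT => h.
  have hT : [set: T] = set0.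
    by apply/seteqP; split => // t _; apply: h; exists t.
  have := probability_setT (P false false); rewrite hT measure0 => /(congr1 fine) /= /eqP.
  by rewrite eq_sym oner_eq0.
have m0 : (0 < #|K|)%N.
  apply/card_gt0P; apply: contrapT => h.
  have := Hpsum t0; rewrite big1 => [/esym/eqP|k _]; first by rewrite oner_eq0.
  by exfalso; apply: h; exists k.
set m := (#|K|%:R : R).
have mpos : (0 < m)%R by rewrite ltr0n.
set r := Num.sqrt (m * eps).
have r0 : (0 < r)%R by rewrite sqrtr_gt0 mulr_gt0.
have r2 : (r ^+ 2 = m * eps)%R by rewrite sqr_sqrtr // mulr_ge0 // ltW.
set al := (r^-1)%R; set be := (r / 4)%R.
have al0 : (0 < al)%R by rewrite invr_gt0.
have be0 : (0 < be)%R by rewrite divr_gt0.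
have albe : (4 * al * be = 1)%R.
  by rewrite /al /be; field; rewrite gt_eqF.
pose S t := (mu false false t + mu false true t + mu true false t + mu true true t)%R.
have S0 t : (0 <= S t)%R.
  by rewrite /S; have := mu0 false false t; have := mu0 false true t;
     have := mu0 true false t; have := mu0 true true t; lra.
have pw t : (Num.sqrt (mu false false t * mu true true t) <=
    \sum_(k : K) (al * (p k t * mu (c k).1 (c k).2 t)) + be * S t)%R.
  have key X Y : (0 <= X)%R -> (0 <= Y)%R ->
      (X * Y = mu false false t * mu true true t)%R -> (Y <= S t)%R ->
      (Num.sqrt (mu false false t * mu true true t) <= al * X + be * S t)%R.
    move=> X0 Y0 <- YS; apply: le_trans (amgm _ _ _ _ _ al0 be0 albe X0 Y0) _.
    by rewrite lerD2l ler_wpM2l // ltW.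
  have hk k : (Num.sqrt (mu false false t * mu true true t) <=
      al * mu (c k).1 (c k).2 t + be * S t)%R.
    case: (c k) => x y /=.
    apply: (key _ (mu (~~ x) (~~ y) t)) => //.
      by case: x; case: y => /=; rewrite ?HPUC // mulrC ?HPUC.
    rewrite /S; have := mu0 false false t; have := mu0 false true t;
     have := mu0 true false t; have := mu0 true true t.
    by case: x; case: y => /=; lra.
  rewrite -[X in (X <= _)%R]mul1r -(Hpsum t) mulr_suml.
  have -> : (be * S t = \sum_(k : K) p k t * (be * S t))%R.
    by rewrite -mulr_suml Hpsum mul1r.
  rewrite -big_split /=; apply: ler_sum => k _.
  rewrite mulrCA -mulrDr; apply: ler_wpM2l => //; exact: hk.
have msq : measurable_fun setT
    (fun t => (Num.sqrt (mu false false t * mu true true t))%:E).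
  apply/measurable_EFinP; apply: measurableT_comp => //.
    exact: continuous_measurable_fun (@sqrt_continuous R).
  exact: measurable_funM.
have mS : measurable_fun setT S.
  by rewrite /S; do 3 apply: measurable_funD => //.
have mpk k : measurable_fun setT (fun t => al * (p k t * mu (c k).1 (c k).2 t))%R.
  apply: measurable_funM => //; exact: measurable_funM.
have Hint : \int[Q]_t (Num.sqrt (mu false false t * mu true true t))%:E
    <= (2 * r)%:E.
  apply: (@le_trans _ _ (\int[Q]_t ((\sum_(k : K)
      (al * (p k t * mu (c k).1 (c k).2 t)))%:E + (be * S t)%:E))).
    apply: ge0_le_integral => //. all: try (by move=> t _; rewrite lee_fin sqrtr_ge0).
    - apply: emeasurable_funD; apply/measurable_EFinP.
        exact: measurable_sum.
      exact: measurable_funM.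
    - by move=> t Ht; rewrite -EFinD lee_fin.
  rewrite ge0_integralD //; last 4 first.
  - by move=> t _; rewrite lee_fin sumr_ge0 // => k _; rewrite mulr_ge0 // ?mulr_ge0 // ltW.
  - by apply/measurable_EFinP; exact: measurable_sum.
  - by move=> t _; rewrite lee_fin mulr_ge0 // ltW.
  - by apply/measurable_EFinP; exact: measurable_funM.
  under eq_integral do rewrite -sumEFin.
  rewrite ge0_integral_sum //; last 2 first.
  - by move=> k; apply/measurable_EFinP.
  - by move=> k t _; rewrite lee_fin mulr_ge0 // ?mulr_ge0 // ltW.
  have Ik k : \int[Q]_t (al * (p k t * mu (c k).1 (c k).2 t))%:E <= (al * eps)%:E.
    under eq_integral do rewrite EFinM.
    rewrite ge0_integralZl_EFin //; last 3 first.
    - by move=> t _; rewrite lee_fin mulr_ge0.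
    - by apply/measurable_EFinP; exact: measurable_funM.
    - exact: ltW.
    by rewrite EFinM; apply: lee_wpmul2l; [rewrite lee_fin ltW|exact: Hc'].
  have HS : \sum_(k : K) \int[Q]_t (al * (p k t * mu (c k).1 (c k).2 t))%:E
      <= \sum_(k : K) (al * eps)%:E by apply: lee_sum => k _; exact: Ik.
  apply: le_trans (leeD HS (lexx _)) _.
  rewrite sumEFin sumr_const.
  under eq_integral do rewrite EFinM.
  rewrite ge0_integralZl_EFin //; last 3 first.
  - by move=> t _; rewrite lee_fin.
  - by apply/measurable_EFinP.
  - exact: ltW.
  have -> : \int[Q]_t (S t)%:E = 4%:E.
    rewrite /S.
    under eq_integral do rewrite !EFinD.
    rewrite !ge0_integralD //. rewrite !Imu. rewrite -!EFinD; congr (_%:E).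
 by ring.
    all: try by move=> x _; rewrite -?EFinD lee_fin ?addr_ge0.
    all: try ((repeat apply: emeasurable_funD); apply/measurable_EFinP).
    all: try exact: mmu.
  rewrite -EFinM -EFinD lee_fin.
  have e1 : (al * eps * m = r)%R.
    by rewrite /al -mulrA (mulrC eps) -r2 expr2 mulKf // gt_eqF.
  have e2 : (be * 4 = r)%R by rewrite /be divfK.
  have e3 : (al * eps *+ #|K| = r)%R by rewrite -e1 mulr_natr.
  rewrite [X in (X + _ <= _)%R](_ : _ = r); last exact: e3.
  rewrite e2; lra.
rewrite /bound /hellinger2 -/m -/r.
move: Hint; set I := \int[Q]_t _.
have I0 : 0 <= I by apply: integral_ge0 => t _; rewrite lee_fin sqrtr_ge0.
move: I I0 => [i| |] //= i0 Hi.
rewrite -EFinB lee_fin; rewrite lee_fin in Hi; lra.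
Qed.
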